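(* Let $X$ be a $T_1$ topological space which is Čech complete (in the sense defined in the context), and let $f:X\to X$ be a topological contraction. Then $f$ has a unique fixed point.
   Context: A topological space $X$ (not assumed Tychonoff) is called Čech complete if there exists a sequence $(\mathcal{U}_i)_{i\in\mathbb{N}}$ of open covers of $X$ such that whenever $(F_m)_m$ is a centered sequence of closed subsets of $X$ (every finite subfamily has nonempty intersection) with the property that for each $i$ there is $m_i$ such that $F_{m_i}$ is contained in some member of $\mathcal{U}_i$, the intersection $\bigcap_m F_m$ is nonempty. A mapping $f:X\to X$ is closed if it maps closed sets to closed sets (continuity is not assumed). A mapping $f:X\to X$ is a topological contraction if $f$ is closed and for every open cover $\mathcal{U}$ of $X$ there exist $n\in\mathbb{N}$ and $U\in\mathcal{U}$ with $f^n[X]\subseteq U$, where $f^n$ is the $n$-fold iterate of $f$. *)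

(* Defs.v *)
From HB Require Import structures.
From mathcomp Require Import all_boot all_order.
From mathcomp Require Import all_classical all_reals topology.
Set Implicit Arguments. Unset Strict Implicit. Unset Printing Implicit Defensive.
Local Open Scope classical_set_scope.

Definition open_cover (T : topologicalType) (C : set (set T)) : Prop :=
  (forall U, C U -> open U) /\ (forall x : T, exists2 U, C U & U x).

Definition centered (T : Type) (F : nat -> set T) : Prop :=
  forall S : set nat, finite_set S -> S !=set0 -> (\bigcap_(m in S) F m) !=set0.

(* Cech completeness as in the paper (no separation axiom assumed). *)
Definition cech_complete (T : topologicalType) : Prop :=
  exists U : nat -> set (set T),
    (forall i, open_cover (U i)) /\
    (forall F : nat -> set T,
       (forall m, closed (F m)) -> centered F ->
       (forall i, exists m, exists2 V, U i V & F m `<=` V) ->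
       (\bigcap_m F m) !=set0).

Definition closed_map (T : topologicalType) (f : T -> T) : Prop :=
  forall A : set T, closed A -> closed (f @` A).

Definition top_contraction (T : topologicalType) (f : T -> T) : Prop :=
  closed_map f /\
  forall C : set (set T), open_cover C ->
    exists n : nat, exists2 U, C U & range (iter n f) `<=` U.

(* Main.v *)
Require Import Defs.
From HB Require Import structures.
From mathcomp Require Import all_boot all_order.
From mathcomp Require Import all_classical all_reals topology.
Local Open Scope classical_set_scope.

Lemma seq_bound (s : seq nat) : exists N, forall m, m \in s -> (m <= N)%N.
Proof.
elim: s => [|a s [N HN]]; first by exists 0%N.
exists (maxn a N) => m; rewrite in_cons => /orP [/eqP ->|/HN H].
  exact: leq_maxl.
by apply: leq_trans H (leq_maxr _ _).
Qed.

Lemma range_dec (T : Type) (f : T -> T) m N : (m <= N)%N ->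
  range (iter N f) `<=` range (iter m f).
Proof.
move=> /subnK <-; elim: (N - m)%N => [|k IH] //= x [y _ <-].
rewrite -iterS iterSr.
have [z _ <-] : range (iter m f) (iter (k + m) f (f y)) by apply: IH; exists (f y).
by exists z => //; done.
Qed.

Theorem theorem1 (T : topologicalType) (f : T -> T) :
  accessible_space T -> cech_complete T -> top_contraction f ->
  exists x : T, f x = x /\ (forall y : T, f y = y -> y = x).
Proof.
move=> acc [U [Ucov Uc]] [fcl fcon].
set F := fun m => range (iter m f).
have Fcl : forall m, closed (F m).
  elim=> [|m IH].
    by rewrite /F (_ : range _ = setT) ?closedT //; apply/seteqP; split=> x // _; exists x.
  rewrite /F (_ : range _ = f @` F m); first exact: fcl.
  apply/seteqP; split=> x.
    by move=> [y _ <-]; exists (iter m f y) => //; exists y.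
  by move=> [_ [y _ <-] <-]; exists y.
have [x0 _] : exists x : T, True.
  case: (pselect (exists x : T, True)) => // nT.
  have := fcon set0; case.
    by split=> // x; exfalso; apply: nT; exists x.
  by move=> n [V []].
have Fcen : centered F.
  move=> S /finite_seqP [s ->] _.
  have [N HN] := seq_bound s.
  exists (iter N f x0) => m /= ms.
  by apply: (@range_dec _ f m N (HN m ms)); exists x0.
have [a Ka] : (\bigcap_m F m) !=set0.
  apply: Uc => // i.
  have [n [V UV HV]] := fcon _ (Ucov i).
  by exists n, V.
have Kfix : forall y, f y = y -> (\bigcap_m F m) y.
  move=> y fy m _; exists y => //.
  elim: m => [|m IH] //=.
  by rewrite IH.
have Kuniq : forall b, (\bigcap_m F m) b -> b = a.
  move=> b Kb; apply/eqP/negPn/negP => nba.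
  have cov : open_cover [set ~` [set a]; ~` [set b]].
    split.
      by move=> V [->|->]; rewrite openC; apply: accessible_closed_set1.
    move=> x; have [->|xa] := eqVneq x a.
      exists (~` [set b]); first by right.
      by move=> /= ab; rewrite ab eqxx in nba.
    exists (~` [set a]); first by left.
    by move=> /= xa'; rewrite xa' eqxx in xa.
  have [n [V CV HV]] := fcon _ cov.
  case: CV => VE; rewrite VE in HV.
    by apply: (HV a (Ka n I)).
  by apply: (HV b (Kb n I)).
exists a; split; last by move=> y /Kfix /Kuniq.
apply: Kuniq => m _.
have [y _ <-] := Ka m I.
by exists (f y) => //; exact: (esym (iterSr m f y)).
Qed.
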